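(* Let $p\equiv1\pmod4$ be a prime. Let $S\subset\mathbb{P}^5$ be the surface over $\mathbb{F}_p$ defined by $x_1^2-x_2^2=x_3^2$, $x_0^2-x_1^2=x_4^2$, $x_0^2-x_2^2=x_5^2$, and let $X\subset\mathbb{A}^3$ be the affine surface over $\mathbb{F}_p$ given by $z^2=(x^2y^2+1)(x^2+y^2)$. Then $$|S(\mathbb{F}_p)|=|X(\mathbb{F}_p)|-1.$$ *)

(* Defs.v *)
From mathcomp Require Import all_boot all_algebra.
Set Implicit Arguments. Unset Strict Implicit. Unset Printing Implicit Defensive.
Import GRing.Theory.
Local Open Scope ring_scope.

(* A point of P^n(F) for a finite field F is represented by its unique
   normalized homogeneous coordinate vector: the first nonzero coordinate is 1. *)
Definition normalized (F : fieldType) (n : nat) (x : {ffun 'I_n -> F}) : bool :=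
  [exists i : 'I_n, (x i == 1) && [forall j : 'I_n, (j < i)%N ==> (x j == 0)]].

Definition S_points (p : nat) : {set {ffun 'I_6 -> 'F_p}} :=
  [set x | normalized x &&
    [&& x (inord 1) ^+ 2 - x (inord 2) ^+ 2 == x (inord 3) ^+ 2,
        x (inord 0) ^+ 2 - x (inord 1) ^+ 2 == x (inord 4) ^+ 2 &
        x (inord 0) ^+ 2 - x (inord 2) ^+ 2 == x (inord 5) ^+ 2]].

Definition X_points (p : nat) : {set 'F_p * 'F_p * 'F_p} :=
  [set t | let: (x, y, z) := t in
     z ^+ 2 == (x ^+ 2 * y ^+ 2 + 1) * (x ^+ 2 + y ^+ 2)].

(* Main.v *)
Require Import Defs.
From mathcomp Require Import all_boot all_algebra.
From mathcomp Require Import ring zify.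
Set Implicit Arguments. Unset Strict Implicit. Unset Printing Implicit Defensive.
Import GRing.Theory.
Local Open Scope ring_scope.

Section Gen.
Variable F : finFieldType.
Hypothesis h2 : (2 : F) != 0.

Definition T6 := (F * F * F * F * F * F)%type.

Definition lc (y : T6) : F := let: (a, b, c, d, e, f) := y in
  if a != 0 then a else if b != 0 then b else if c != 0 then c else
  if d != 0 then d else if e != 0 then e else f.

Definition nrm6 (y : T6) : bool := lc y == 1.

Definition sc (l : F) (y : T6) : T6 := let: (a, b, c, d, e, f) := y in
  (l * a, l * b, l * c, l * d, l * e, l * f).

Lemma lc_sc l y : l != 0 -> lc (sc l y) = l * lc y.
Proof.
move=> hl; case: y => [[[[[a b] c] d] e] f] /=.
rewrite !mulf_eq0 (negbTE hl) /=.
have [->|ha] := eqVneq a 0 => //=.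
have [->|hb] := eqVneq b 0 => //=.
have [->|hc] := eqVneq c 0 => //=.
have [->|hd] := eqVneq d 0 => //=.
by have [->|he] := eqVneq e 0.
Qed.

Lemma sc_sc l m y : sc l (sc m y) = sc (l * m) y.
Proof. by case: y => [[[[[a b] c] d] e] f] /=; rewrite !mulrA. Qed.

Lemma chart (P : pred T6) (U : finType) (psi : T6 -> U) (gam : U -> T6) :
  (forall l y, l != 0 -> P (sc l y) = P y) ->
  (forall l y, l != 0 -> P y -> psi (sc l y) = psi y) ->
  (forall y, nrm6 y -> P y -> exists2 l, l != 0 & y = sc l (gam (psi y))) ->
  (forall u, P (gam u) -> psi (gam u) = u /\ lc (gam u) != 0) ->
  #|[set y | nrm6 y && P y]| = #|[set u | P (gam u)]|.
Proof.
move=> H1 H2 H3 H4.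
have -> : [set u | P (gam u)] = psi @: [set y | nrm6 y && P y].
  apply/setP => u; rewrite !inE.
  apply/idP/imsetP; last first.
    case=> y; rewrite inE => /andP [ny py] ->.
    have [l hl ey] := H3 y ny py.
    by rewrite ey H1 // in py.
  move=> pg; have [hpsi hlc] := H4 u pg.
  exists (sc (lc (gam u))^-1 (gam u)).
    rewrite inE /nrm6 lc_sc ?invr_eq0 // mulVf // eqxx /=.
    by rewrite H1 // invr_eq0.
  by rewrite H2 // invr_eq0.
rewrite card_in_imset //.
move=> y1 y2; rewrite !inE => /andP [n1 p1] /andP [n2 p2] e.
have [l1 hl1 e1] := H3 y1 n1 p1.
have [l2 hl2 e2] := H3 y2 n2 p2.
rewrite -e in e2.
set g := gam (psi y1) in e1 e2.
have a1 : l1 * lc g = 1 by rewrite -lc_sc // -e1; apply/eqP.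
have a2 : l2 * lc g = 1 by rewrite -lc_sc // -e2; apply/eqP.
have hg : lc g != 0.
  by apply/eqP => h; move: a1; rewrite h mulr0 => /eqP; rewrite eq_sym oner_eq0.
have el : l1 = l2 by apply: (mulIf hg); rewrite a1 a2.
by rewrite e1 e2 el.
Qed.


Lemma lc_eq0 (a b c d e f : F) : (lc (a, b, c, d, e, f) == 0) =
  [&& a == 0, b == 0, c == 0, d == 0, e == 0 & f == 0].
Proof.
rewrite /=.
have [->|ha] := eqVneq a 0 => //=; first last. by rewrite (negbTE ha).
have [->|hb] := eqVneq b 0 => //=; first last. by rewrite (negbTE hb).
have [->|hc] := eqVneq c 0 => //=; first last. by rewrite (negbTE hc).
have [->|hd] := eqVneq d 0 => //=; first last. by rewrite (negbTE hd).
by have [->|he] := eqVneq e 0 => //=; rewrite (negbTE he).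
Qed.

Definition eqs6 (y : T6) : bool := let: (a, b, c, d, e, f) := y in
  [&& b ^+ 2 - c ^+ 2 == d ^+ 2, a ^+ 2 - b ^+ 2 == e ^+ 2 & a ^+ 2 - c ^+ 2 == f ^+ 2].

Lemma sq_sc (l x y z : F) : l != 0 ->
  ((l * x) ^+ 2 - (l * y) ^+ 2 == (l * z) ^+ 2) = (x ^+ 2 - y ^+ 2 == z ^+ 2).
Proof.
move=> hl; rewrite !exprMn -mulrBr; apply: inj_eq; exact: mulfI (expf_neq0 2 hl).
Qed.

Lemma eqs6_sc l y : l != 0 -> eqs6 (sc l y) = eqs6 y.
Proof. by move=> hl; case: y => [[[[[a b] c] d] e] f] /=; rewrite !sq_sc. Qed.

Definition PA (y : T6) : bool := let: (a, b, c, d, e, f) := y in eqs6 y && (d != 0).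
Definition psiA (y : T6) : F * F * F := let: (a, b, c, d, e, f) := y in
  ((b + c) / d, (f + e) / d, 2 * ((b + c) / d) * ((f + e) / d) * a / d).
Definition gamA (u : F * F * F) : T6 := let: (s, t, z) := u in
  (z / (2 * s * t), (s + s^-1) / 2, (s - s^-1) / 2, 1, (t - t^-1) / 2, (t + t^-1) / 2).
Definition XR (u : F * F * F) : bool := let: (s, t, z) := u in
  z ^+ 2 == (s ^+ 2 * t ^+ 2 + 1) * (s ^+ 2 + t ^+ 2).

Lemma keyA2 (s t z : F) : s != 0 -> t != 0 ->
  (z / (2 * s * t)) ^+ 2 - ((s + s^-1) / 2) ^+ 2 - ((t - t^-1) / 2) ^+ 2
  = (z ^+ 2 - (s ^+ 2 * t ^+ 2 + 1) * (s ^+ 2 + t ^+ 2)) / (2 * s * t) ^+ 2.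
Proof. by move=> hs ht; field; rewrite hs ht h2. Qed.

Lemma keyA3 (s t z : F) : s != 0 -> t != 0 ->
  (z / (2 * s * t)) ^+ 2 - ((s - s^-1) / 2) ^+ 2 - ((t + t^-1) / 2) ^+ 2
  = (z ^+ 2 - (s ^+ 2 * t ^+ 2 + 1) * (s ^+ 2 + t ^+ 2)) / (2 * s * t) ^+ 2.
Proof. by move=> hs ht; field; rewrite hs ht h2. Qed.

Lemma keyA1 (s : F) : s != 0 -> ((s + s^-1) / 2) ^+ 2 - ((s - s^-1) / 2) ^+ 2 = 1 ^+ 2.
Proof. by move=> hs; field; rewrite hs h2. Qed.


Lemma PA_sc l y : l != 0 -> PA (sc l y) = PA y.
Proof.
move=> hl; have := eqs6_sc y hl.
by case: y => [[[[[a b] c] d] e] f] /= ->; rewrite mulf_eq0 (negbTE hl).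
Qed.

Lemma psiA_sc l y : l != 0 -> PA y -> psiA (sc l y) = psiA y.
Proof.
move=> hl; case: y => [[[[[a b] c] d] e] f] /= /andP [_ hd].
by congr (_, _, _); field; rewrite hd hl ?h2.
Qed.

Lemma PA_rep y : PA y -> exists2 l, l != 0 & y = sc l (gamA (psiA y)).
Proof.
case: y => [[[[[a b] c] d] e] f] /= /andP [/and3P [E1 E2 E3] hd].
have hbc : (b + c) * (b - c) = d ^+ 2 by rewrite -(eqP E1); ring.
have hfe : (f + e) * (f - e) = d ^+ 2.
  transitivity (f ^+ 2 - e ^+ 2); first by ring.
  by rewrite -(eqP E3) -(eqP E2) -(eqP E1); ring.
have hbc0 : b + c != 0.
  by apply/eqP=> h; move: (expf_neq0 2 hd); rewrite -hbc h mul0r eqxx.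
have hfe0 : f + e != 0.
  by apply/eqP=> h; move: (expf_neq0 2 hd); rewrite -hfe h mul0r eqxx.
have hs : (b + c) / d != 0 by rewrite mulf_neq0 ?invr_eq0.
have ht : (f + e) / d != 0 by rewrite mulf_neq0 ?invr_eq0.
have si : ((b + c) / d)^-1 = (b - c) / d.
  apply: (mulfI hs); rewrite divff // mulrACA -invfM hbc -expr2 divff //.
  exact: expf_neq0.
have ti : ((f + e) / d)^-1 = (f - e) / d.
  apply: (mulfI ht); rewrite divff // mulrACA -invfM hfe -expr2 divff //.
  exact: expf_neq0.
exists d => //; rewrite /= si ti.
congr (_, _, _, _, _, _); field; by rewrite ?hd ?hbc0 ?hfe0 ?h2.
Qed.

Lemma PA_gamE s t z : PA (gamA (s, t, z)) = [&& s != 0, t != 0 & XR (s, t, z)].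
Proof.
have [->|hs] := eqVneq s 0.
  by rewrite /= invr0 !(addr0, subr0, mul0r) expr2 mul0r subr0 expr1n eq_sym oner_eq0.
have [->|ht] := eqVneq t 0.
  apply/negbTE; apply/negP => /= /andP [/and3P [E1 E2 E3] _].
  move: E2 E3; rewrite invr0 !(addr0, subr0, mul0r) (expr2 0) mul0r.
  rewrite !subr_eq0 => /eqP E2 /eqP E3; move: E1.
  by rewrite -E2 -E3 subrr expr1n eq_sym oner_eq0.
rewrite /= keyA1 // eqxx oner_eq0 andbT /=.
have E (A B C : F) : (A - B == C) = (A - B - C == 0) by rewrite subr_eq0.
rewrite [X in X && _]E [X in _ && X]E keyA2 // keyA3 //.
rewrite andbb mulf_eq0 invr_eq0 expf_eq0 /= !mulf_eq0 (negbTE h2) (negbTE hs) (negbTE ht).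
by rewrite !orbF subr_eq0.
Qed.

Lemma PA_gam u : PA (gamA u) -> psiA (gamA u) = u /\ lc (gamA u) != 0.
Proof.
case: u => [[s t] z]; rewrite PA_gamE => /and3P [hs ht _]; split.
  by rewrite /=; congr (_, _, _); field; rewrite ?hs ?ht ?h2 ?oner_neq0.
by rewrite lc_eq0 oner_eq0 /= !andbF.
Qed.

Lemma cardA : #|[set y | nrm6 y && PA y]| =
  #|[set u | let: (s, t, z) := u in [&& s != 0, t != 0 & XR (s, t, z)]]|.
Proof.
rewrite (chart PA_sc psiA_sc (fun y _ => @PA_rep y) PA_gam).
by apply: eq_card => -[[s t] z]; rewrite !inE PA_gamE.
Qed.


Lemma one_neq_m1 : (1 : F) != -1.
Proof.
apply/eqP => h; move: h2; rewrite -[2]/(1 + 1 : F) {2}h subrr eqxx //.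
Qed.

Lemma cardR : #|[set x : F | x ^+ 2 == 1]| = 2%N.
Proof.
have -> : [set x : F | x ^+ 2 == 1] = [set 1; -1].
  by apply/setP => x; rewrite !inE sqrf_eq1.
by rewrite cards2 one_neq_m1.
Qed.

Definition PB1 (y : T6) : bool := let: (a, b, c, d, e, f) := y in
  [&& eqs6 y, d == 0 & b != 0].
Definition psiB1 (y : T6) : F * (F * F * F) := let: (a, b, c, d, e, f) := y in
  (c / b, (a / b, e / b, f / b)).
Definition gamB1 (u : F * (F * F * F)) : T6 := let: (c, (a, e, f)) := u in
  (a, 1, c, 0, e, f).

Lemma PB1_sc l y : l != 0 -> PB1 (sc l y) = PB1 y.
Proof.
move=> hl; have := eqs6_sc y hl.
by case: y => [[[[[a b] c] d] e] f] /= ->; rewrite !mulf_eq0 (negbTE hl).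
Qed.

Lemma psiB1_sc l y : l != 0 -> PB1 y -> psiB1 (sc l y) = psiB1 y.
Proof.
move=> hl; case: y => [[[[[a b] c] d] e] f] /= /and3P [_ _ hb].
by congr (_, (_, _, _)); field; rewrite hb hl.
Qed.

Lemma PB1_rep y : PB1 y -> exists2 l, l != 0 & y = sc l (gamB1 (psiB1 y)).
Proof.
case: y => [[[[[a b] c] d] e] f] /= /and3P [_ /eqP -> hb].
exists b => //; rewrite mulr0 mulr1.
by congr (_, _, _, _, _, _); field; rewrite hb.
Qed.

Lemma PB1_gam u : PB1 (gamB1 u) -> psiB1 (gamB1 u) = u /\ lc (gamB1 u) != 0.
Proof.
case: u => c [[a e] f] _; split; first by rewrite /= !divr1.
by rewrite lc_eq0 oner_eq0 /= !andbF.
Qed.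

Definition Hs := [set w : F * F | w.1 ^+ 2 - 1 == w.2 ^+ 2].
Definition Qs := [set w : F * F * F | (w.1.1 ^+ 2 - 1 == w.1.2 ^+ 2) && (w.1.1 ^+ 2 - 1 == w.2 ^+ 2)].

Lemma cardB1 : #|[set y | nrm6 y && PB1 y]| = (2 * #|Qs|)%N.
Proof.
rewrite (chart PB1_sc psiB1_sc (fun y _ => @PB1_rep y) PB1_gam).
rewrite -cardR -cardsX; apply: eq_card => -[c [[a e] f]]; rewrite !inE /=.
rewrite oner_neq0 eqxx !andbT expr1n (expr2 0) mul0r subr_eq0 eq_sym.
by have [/eqP ->|] := boolP (c ^+ 2 == 1).
Qed.

Definition PB2 (y : T6) : bool := let: (a, b, c, d, e, f) := y in
  [&& eqs6 y, d == 0, b == 0 & a != 0].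
Definition psiB2 (y : T6) : F * F := let: (a, b, c, d, e, f) := y in (e / a, f / a).
Definition gamB2 (u : F * F) : T6 := let: (e, f) := u in (1, 0, 0, 0, e, f).

Lemma PB2_sc l y : l != 0 -> PB2 (sc l y) = PB2 y.
Proof.
move=> hl; have := eqs6_sc y hl.
by case: y => [[[[[a b] c] d] e] f] /= ->; rewrite !mulf_eq0 (negbTE hl).
Qed.

Lemma psiB2_sc l y : l != 0 -> PB2 y -> psiB2 (sc l y) = psiB2 y.
Proof.
move=> hl; case: y => [[[[[a b] c] d] e] f] /= /and4P [_ _ _ ha].
by congr (_, _); field; rewrite ha hl.
Qed.

Lemma PB2_rep y : PB2 y -> exists2 l, l != 0 & y = sc l (gamB2 (psiB2 y)).
Proof.
case: y => [[[[[a b] c] d] e] f] /= /and4P [/and3P [E1 _ _] /eqP hd /eqP hb ha].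
move: E1; rewrite hd hb (expr2 0) mul0r sub0r oppr_eq0 expf_eq0 /= => /eqP ->.
exists a => //; rewrite mulr0 mulr1.
by congr (_, _, _, _, _, _); field; rewrite ha.
Qed.

Lemma PB2_gam u : PB2 (gamB2 u) -> psiB2 (gamB2 u) = u /\ lc (gamB2 u) != 0.
Proof.
case: u => e f _; split; first by rewrite /= !divr1.
by rewrite lc_eq0 oner_eq0.
Qed.

Lemma cardB2 : #|[set y | nrm6 y && PB2 y]| = 4%N.
Proof.
rewrite (chart PB2_sc psiB2_sc (fun y _ => @PB2_rep y) PB2_gam).
rewrite -[4%N]/(2 * 2)%N -cardR -cardsX; apply: eq_card => -[e f]; rewrite !inE /=.
rewrite oner_eq0 !eqxx /= !andbT expr1n (expr2 0) mul0r !subr0 eqxx /=.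
by rewrite ![1 == _]eq_sym.
Qed.


Lemma eq_opp (x : F) : (x == - x) = (x == 0).
Proof. by rewrite -addr_eq0 -mulr2n -mulr_natl mulf_eq0 (negbTE h2). Qed.

Definition hmap (u : F) : F * F := ((u + u^-1) / 2, (u - u^-1) / 2).

Lemma cardH : (#|Hs| + 1)%N = #|F|.
Proof.
have hinj : injective hmap.
  move=> u v [e1 e2].
  have k (w : F) : w = (w + w^-1) / 2 + (w - w^-1) / 2 by move: (w^-1) => v0; field; rewrite ?h2.
  by rewrite (k u) (k v) e1 e2.
have -> : Hs = hmap @: [set~ 0].
  apply/setP => -[a e]; rewrite inE /=; apply/idP/imsetP.
    move=> H.
    have h0 : a ^+ 2 - e ^+ 2 = 1 by rewrite -(eqP H); ring.
    have h1 : (a + e) * (a - e) = 1 by rewrite -h0; ring.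
    have hu : a + e != 0.
      by apply/eqP => h; move: h1; rewrite h mul0r => /eqP; rewrite eq_sym oner_eq0.
    have ui : (a + e)^-1 = a - e by rewrite -[LHS]mulr1 -h1 mulKf.
    exists (a + e); first by rewrite !inE.
    by rewrite /hmap ui; congr (_, _); field; rewrite ?h2.
  by case=> u; rewrite !inE => hu [-> ->]; apply/eqP; field; rewrite ?hu ?h2.
rewrite card_imset // cardsC1.
have : (0 < #|F|)%N by apply/card_gt0P; exists 0.
by case: #|F| => // n _; rewrite addn1.
Qed.

Definition f1 (w : F * F) : F * F * F := (w.1, w.2, w.2).
Definition f2 (w : F * F) : F * F * F := (w.1, w.2, - w.2).

Lemma mem_f1 a e f : ((a, e, f) \in f1 @: Hs) = ((a, e) \in Hs) && (f == e).
Proof.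
apply/imsetP/andP.
  by case=> -[a' e'] h [-> -> ->].
by case=> h /eqP ->; exists (a, e).
Qed.

Lemma mem_f2 a e f : ((a, e, f) \in f2 @: Hs) = ((a, e) \in Hs) && (f == - e).
Proof.
apply/imsetP/andP.
  by case=> -[a' e'] h [-> -> ->].
by case=> h /eqP ->; exists (a, e).
Qed.

Lemma cardQ : (#|Qs| + 2)%N = (#|Hs| + #|Hs|)%N.
Proof.
have i1 : injective f1 by move=> [a e] [a' e'] [-> ->].
have i2 : injective f2 by move=> [a e] [a' e'] [-> ->].
rewrite -{1}(card_imset Hs i1) -(card_imset Hs i2) -cardsUI.
congr (_ + _)%N.
  apply: eq_card => -[[a e] f]; rewrite !inE mem_f1 mem_f2 !inE /=.
  have [H|H] := boolP (a ^+ 2 - 1 == e ^+ 2); last first.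
    by apply/negbTE; apply: contra H => /andP [].
  by rewrite (eqP H) /= eq_sym eqf_sqr.
pose g (a : F) : F * F * F := (a, 0, 0).
have ig : injective g by move=> x y [].
rewrite -cardR -(card_imset _ ig); symmetry; apply: eq_card => -[[a e] f].
rewrite !inE mem_f1 mem_f2 !inE /=.
apply/idP/imsetP.
  case/andP => /andP [H /eqP fe] /andP [_]; rewrite fe eq_opp => /eqP e0.
  exists a; last by rewrite /g e0.
  by rewrite inE -subr_eq0 (eqP H) e0 expr2 mul0r.
case=> x; rewrite inE => hx [-> -> ->].
by rewrite (expr2 0) mul0r subr_eq0 hx /= oppr0 eqxx.
Qed.

Definition Ms := [set w : F * F | w.2 ^+ 2 == w.1 ^+ 2].

Lemma cardM : (#|Ms| + 1)%N = (#|F| + #|F|)%N.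
Proof.
pose d1 (s : F) := (s, s). pose d2 (s : F) := (s, - s).
have i1 : injective d1 by move=> x y [].
have i2 : injective d2 by move=> x y [].
have m1 s z : ((s, z) \in d1 @: setT) = (z == s).
  apply/imsetP/eqP; first by case=> x _ [-> ->].
  by move=> ->; exists s.
have m2 s z : ((s, z) \in d2 @: setT) = (z == - s).
  apply/imsetP/eqP; first by case=> x _ [-> ->].
  by move=> ->; exists s.
rewrite -[in RHS]cardsT -{1}(card_imset setT i1) -(card_imset setT i2) -cardsUI.
congr (_ + _)%N.
  by apply: eq_card => -[s z]; rewrite !inE m1 m2 ?inE /= eqf_sqr.
rewrite -(cards1 ((0, 0) : F * F)); symmetry; apply: eq_card => -[s z].
rewrite !inE m1 m2 ?inE xpair_eqE.
apply/andP/andP.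
  by case=> /eqP ->; rewrite eq_opp => ->.
by case=> /eqP -> /eqP ->; rewrite oppr0.
Qed.

Definition Es := [set u : F * F * F | let: (s, t, z) := u in
  ((s == 0) || (t == 0)) && XR (s, t, z)].

Lemma cardE : (#|Es| + 1)%N = (#|Ms| + #|Ms|)%N.
Proof.
pose m1 (w : F * F) : F * F * F := (w.1, 0, w.2).
pose m2 (w : F * F) : F * F * F := (0, w.1, w.2).
have i1 : injective m1 by move=> [a e] [a' e'] [-> ->].
have i2 : injective m2 by move=> [a e] [a' e'] [-> ->].
have k1 s t z : ((s, t, z) \in m1 @: Ms) = (t == 0) && (z ^+ 2 == s ^+ 2).
  apply/imsetP/andP.
    by case=> -[a e]; rewrite inE => h [-> -> ->].
  by case=> /eqP -> h; exists (s, z); rewrite ?inE.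
have k2 s t z : ((s, t, z) \in m2 @: Ms) = (s == 0) && (z ^+ 2 == t ^+ 2).
  apply/imsetP/andP.
    by case=> -[a e]; rewrite inE => h [-> -> ->].
  by case=> /eqP -> h; exists (t, z); rewrite ?inE.
rewrite -{1}(card_imset Ms i1) -(card_imset Ms i2) -cardsUI.
congr (_ + _)%N.
  apply: eq_card => -[[s t] z]; rewrite !inE k1 k2 ?inE /=.
  have [->|hs] := eqVneq s 0; have [->|ht] := eqVneq t 0 => //=;
    by rewrite (expr2 0) !(mul0r, mulr0, add0r, addr0, mul1r, orbF, orbb).
rewrite -(cards1 ((0, 0, 0) : F * F * F)); symmetry; apply: eq_card => -[[s t] z].
rewrite !inE k1 k2 ?inE !xpair_eqE.
apply/andP/idP.
  case=> /andP [/eqP -> _] /andP [/eqP -> ]; rewrite (expr2 0) mul0r.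
  by rewrite expf_eq0 /= => ->; rewrite !eqxx.
by case/andP => /andP [/eqP -> /eqP ->] /eqP ->; rewrite !eqxx.
Qed.


Lemma splitc (T : finType) (p q : pred T) :
  #|[set x | p x]| = (#|[set x | p x && q x]| + #|[set x | p x && ~~ q x]|)%N.
Proof.
rewrite -(cardsID [set x | q x] [set x | p x]); congr (_ + _)%N.
  by apply: eq_card => x; rewrite !inE.
by apply: eq_card => x; rewrite !inE andbC.
Qed.

Lemma B2split (a b c d e f : F) :
  nrm6 (a, b, c, d, e, f) && eqs6 (a, b, c, d, e, f) && ~~ (d != 0) && ~~ (b != 0)
  = nrm6 (a, b, c, d, e, f) && PB2 (a, b, c, d, e, f).
Proof.
rewrite !negbK /PB2.
have [->|hd] := eqVneq d 0; last by rewrite !(andbF, andFb).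
have [->|hb] := eqVneq b 0; last by rewrite !(andbF, andFb).
have [->|ha] := eqVneq a 0; last by rewrite !andbT.
rewrite !andbT /= andbF.
rewrite andbF; apply/negbTE/negP => /and4P [N E1 E2 E3].
move: E1 E2 E3; rewrite (expr2 0) mul0r !(subrr, sub0r) oppr_eq0 expf_eq0 /= => /eqP c0.
rewrite c0 (expr2 0) mul0r oppr0 !(eq_sym 0) !expf_eq0 /= => /eqP e0 /eqP f0.
by move: N; rewrite /nrm6 c0 e0 f0 /= eqxx /= eq_sym oner_eq0.
Qed.


Lemma main_gen : (#|[set y | nrm6 y && eqs6 y]| + 1)%N = #|[set u : F * F * F | XR u]|.
Proof.
pose q1 (y : T6) := let: (a, b, c, d, e, f) := y in d != 0.
pose q2 (y : T6) := let: (a, b, c, d, e, f) := y in b != 0.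
pose qX (u : F * F * F) := let: (s, t, z) := u in [&& s != 0, t != 0 & XR (s, t, z)].
have s1 := splitc (fun y => nrm6 y && eqs6 y) q1.
have s2 := splitc (fun y => nrm6 y && eqs6 y && ~~ q1 y) q2.
have sX := splitc (fun u => XR u) qX.
have eA : #|[set y | nrm6 y && eqs6 y && q1 y]| = #|[set y | nrm6 y && PA y]|.
  by apply: eq_card => -[[[[[a b] c] d] e] f]; rewrite !inE /= !andbA.
have eB1 : #|[set y | nrm6 y && eqs6 y && ~~ q1 y && q2 y]| = #|[set y | nrm6 y && PB1 y]|.
  by apply: eq_card => -[[[[[a b] c] d] e] f]; rewrite !inE /= negbK !andbA.
have eB2 : #|[set y | nrm6 y && eqs6 y && ~~ q1 y && ~~ q2 y]| = #|[set y | nrm6 y && PB2 y]|.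
  by apply: eq_card => -[[[[[a b] c] d] e] f]; rewrite !inE /= B2split.
have eX : #|[set u | XR u && qX u]| =
    #|[set u | let: (s, t, z) := u in [&& s != 0, t != 0 & XR (s, t, z)]]|.
  by apply: eq_card => -[[s t] z]; rewrite !inE /=; case: (_ ^+ 2 == _); rewrite ?andbT ?andbF.
have eE : #|[set u | XR u && ~~ qX u]| = #|Es|.
  apply: eq_card => -[[s t] z]; rewrite !inE /=.
  by case: (_ ^+ 2 == _); rewrite ?andbT ?andbF // negb_and !negbK.
rewrite s1 s2 sX eA eB1 eB2 eX eE cardA cardB1 cardB2.
have := cardE; have := cardM; have := cardQ; have := cardH.
lia.
Qed.

End Gen.

Section Bridge.
Variable F : finFieldType.

Definition tof (x : {ffun 'I_6 -> F}) : T6 F :=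
  (x (inord 0), x (inord 1), x (inord 2), x (inord 3), x (inord 4), x (inord 5)).

Lemma ordE (i : 'I_6) : i = inord (val i).
Proof. by rewrite inord_val. Qed.

Lemma tof_inj : injective tof.
Proof.
move=> x x' [e0 e1 e2 e3 e4 e5]; apply/ffunP => i; rewrite (ordE i).
by case: i => [[|[|[|[|[|[|k]]]]]] hk] //=.
Qed.

Lemma norm_fwd (x : {ffun 'I_6 -> F}) : normalized x ->
  exists2 k, (k < 6)%N & (forall m, (m < k)%N -> x (inord m) == 0) /\ x (inord k) == 1.
Proof.
case/existsP => i /andP [xi /forallP H]; exists (val i); first exact: ltn_ord.
split; last by rewrite -ordE.
move=> m hm; have hm6 : (m < 6)%N by apply: ltn_trans hm (ltn_ord i).
by have := H (inord m); rewrite inordK // hm.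
Qed.

Lemma norm_bwd (x : {ffun 'I_6 -> F}) k : (k < 6)%N ->
  (forall m, (m < k)%N -> x (inord m) == 0) -> x (inord k) == 1 -> normalized x.
Proof.
move=> hk H1 H2; apply/existsP; exists (inord k); rewrite H2 /=.
apply/forallP => j; apply/implyP; rewrite inordK // => hj.
by rewrite (ordE j); apply: H1.
Qed.

Lemma normE (x : {ffun 'I_6 -> F}) : normalized x = nrm6 (tof x).
Proof.
apply/idP/idP.
  case/norm_fwd => k hk [H1 H2].
  rewrite /nrm6 /=.
  case: k hk H1 H2 => [|[|[|[|[|[|k]]]]]] // _ H1 /eqP H2;
    idtac.
  all: try rewrite (eqP (H1 0%N isT)); try rewrite (eqP (H1 1%N isT)); try rewrite (eqP (H1 2%N isT)); try rewrite (eqP (H1 3%N isT)); try rewrite (eqP (H1 4%N isT)).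
  all: rewrite ?H2 ?eqxx ?oner_eq0 //=.
  all: idtac.
rewrite /nrm6 /=.
case: ifP => h0; first by move=> h; apply: (@norm_bwd _ 0%N).
move/negbFE: h0 => h0.
case: ifP => h1.
  by move=> h; apply: (@norm_bwd _ 1%N) => // -[|m] // _.
move/negbFE: h1 => h1.
case: ifP => h2.
  by move=> h; apply: (@norm_bwd _ 2%N) => // -[|[|m]] // _.
move/negbFE: h2 => h2.
case: ifP => h3.
  by move=> h; apply: (@norm_bwd _ 3%N) => // -[|[|[|m]]] // _.
move/negbFE: h3 => h3.
case: ifP => h4.
  by move=> h; apply: (@norm_bwd _ 4%N) => // -[|[|[|[|m]]]] // _.
move/negbFE: h4 => h4.
by move=> h; apply: (@norm_bwd _ 5%N) => // -[|[|[|[|[|m]]]]] // _.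
Qed.

End Bridge.

Local Close Scope ring_scope.

Lemma two_neq0 (p : nat) : prime p -> p %% 4 = 1 -> (2%R : 'F_p) != 0%R.
Proof.
move=> hp hp4; rewrite -(dvdn_pcharf (pchar_Fp hp) 2).
apply/negP => /dvdn_leq h; have := prime_gt1 hp; have := h isT; lia.
Qed.

Theorem lemma4p4 (p : nat) (hp : prime p) (hp4 : p %% 4 = 1) :
  #|S_points p| = (#|X_points p| - 1)%N.
Proof.
have h2 := two_neq0 hp hp4.
have -> : X_points p = [set u | @XR _ u] by apply/setP => -[[s t] z]; rewrite !inE.
rewrite -(main_gen h2) addnK -(card_imset _ (@tof_inj _)).
apply: eq_card => y; rewrite inE.
apply/imsetP/idP.
  case=> x; rewrite inE => /andP [nx ex] ->.
  by rewrite -normE nx.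
case: y => [[[[[a b] c] d] e] f] /andP [ny ey].
pose x : {ffun 'I_6 -> 'F_p} := [ffun i : 'I_6 => nth 0%R [:: a; b; c; d; e; f] i].
have tx : tof x = (a, b, c, d, e, f) by rewrite /tof !ffunE !inordK.
exists x => //; rewrite inE normE tx ny /=.
by move: ey; rewrite /x !ffunE !inordK.
Qed.
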